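(* Let the number of agents be even, $n=2p$. Then the Bloc formation mechanism Nash implements the majority correspondence $Maj$ in the following sense: for every preference profile $R$ with $|Maj(R)|=1$, every Nash equilibrium outcome is $Maj(R)$; and for every $R$ with $Maj(R)=\{a,b\}$, the unique Nash equilibrium outcome is the lottery assigning probability $1/2$ to each of $a$ and $b$.
   Context: Agents $I=\{1,\dots,n\}$, $n=2p$, options $A=\{a,b\}$, each agent with a strict preference over $A$; preferences over lotteries follow stochastic dominance: an agent preferring $x$ weakly (strictly) prefers $\beta$ to $\eta$ iff $\beta(x)\ge\eta(x)$ ($>$). Majority correspondence: $Maj(R)=a$ if $|\{i:aR_ib\}|\ge p+1$, $Maj(R)=b$ if $|\{i:bR_ia\}|\ge p+1$, and $Maj(R)=\{a,b\}$ otherwise. Bloc formation mechanism: each agent sends $m_i=(v_i,c_i)$ with $v_i\in A$ and $c_i$ a set of exactly $p$ agents other than $i$. For $x\in A$, a set $B$ with $|B|\ge p+1$ is a bloc in favor of $x$ in $m$ if $v_i=x$ and $c_i\subseteq B$ for every $i\in B$. If $m$ admits a bloc in favor of $x$ the outcome is $x$; otherwise the outcome is the lottery $\eta(m)$ with $\eta^x(m)=\sum_{i}\eta_i(m)\mathbf 1\{v_i=x\}$, $\eta_i(m)=|\{j\ne i: i\in c_j\}|/(np)$. *)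

(* Defs.v *)
From mathcomp Require Import all_boot all_order all_algebra.
Set Implicit Arguments. Unset Strict Implicit. Unset Printing Implicit Defensive.
Import Order.TTheory GRing.Theory Num.Theory.
Local Open Scope ring_scope.

Definition alt := bool.
Definition opt_a : alt := true.
Definition opt_b : alt := false.

(* Agents: 'I_(2*p).  A strict preference over the two options is
   determined by the preferred option: R i = x means x P_i y. *)
Definition agent (p : nat) := 'I_(2 * p).
Definition profile (p : nat) := {ffun agent p -> alt}.

Definition lottery := {ffun alt -> rat}.
Definition pure (x : alt) : lottery := [ffun y => ((y == x)%:R : rat)].
Definition half_lottery : lottery := [ffun _ => (1 / 2)%R].

(* Stochastic dominance for an agent whose preferred option is x:
   strict preference of beta over eta iff beta(x) > eta(x). *)
Definition sd_strict (x : alt) (beta eta : lottery) : bool := (eta x < beta x)%R.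

Definition supporters p (R : profile p) (x : alt) : {set agent p} :=
  [set i | R i == x].
Definition Maj p (R : profile p) : {set alt} :=
  if (p.+1 <= #|supporters R opt_a|)%N then [set opt_a]
  else if (p.+1 <= #|supporters R opt_b|)%N then [set opt_b]
  else [set: alt].

Definition message p := (alt * {set agent p})%type.
Definition valid_msg p (i : agent p) (mi : message p) : bool :=
  (#|mi.2| == p) && (i \notin mi.2).
Definition mprofile p := {ffun agent p -> message p}.
Definition valid_profile p (m : mprofile p) : bool :=
  [forall i, valid_msg i (m i)].

Definition is_bloc p (m : mprofile p) (x : alt) (B : {set agent p}) : bool :=
  (p.+1 <= #|B|)%N && [forall i in B, ((m i).1 == x) && ((m i).2 \subset B)].
Definition has_bloc p (m : mprofile p) (x : alt) : bool :=
  [exists B, is_bloc m x B].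

Definition eta_i p (m : mprofile p) (i : agent p) : rat :=
  (#|[set j | (j != i) && (i \in (m j).2)]|%:R / (2 * p * p)%:R)%R.
Definition eta_lottery p (m : mprofile p) : lottery :=
  [ffun x => (\sum_(i : agent p | (m i).1 == x) eta_i m i)%R].

Definition outcome p (m : mprofile p) : lottery :=
  if has_bloc m opt_a then pure opt_a
  else if has_bloc m opt_b then pure opt_b
  else eta_lottery m.

Definition deviate p (m : mprofile p) (i : agent p) (mi : message p) : mprofile p :=
  [ffun j => if j == i then mi else m j].

Definition nash_eq p (R : profile p) (m : mprofile p) : Prop :=
  valid_profile m /\
  forall (i : agent p) (mi : message p), valid_msg i mi ->
    ~~ sd_strict (R i) (outcome (deviate m i mi)) (outcome m).

(* Main.v *)
Require Import Defs.
From mathcomp Require Import all_boot all_order all_algebra.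
From mathcomp Require Import zify ring lra.
Set Implicit Arguments. Unset Strict Implicit. Unset Printing Implicit Defensive.
Import Order.TTheory GRing.Theory Num.Theory.

Definition named p (m : mprofile p) (k : agent p) : {set agent p} :=
  [set j | (j != k) && (k \in (m j).2)].
Definition Fc p (m : mprofile p) (x : alt) (k : agent p) : nat :=
  if (m k).1 == x then #|named m k| else 0.
Definition cnt p (m : mprofile p) (x : alt) : nat := \sum_k Fc m x k.
Definition DD p := (2 * p * p)%N.
Definition score p (m : mprofile p) (x : alt) : nat :=
  if has_bloc m true then (x == true) * DD p
  else if has_bloc m false then (x == false) * DD p
  else cnt m x.

Lemma card_agent p : #|{: agent p}| = (2 * p)%N.
Proof. exact: card_ord. Qed.

Lemma validP p (m : mprofile p) i : valid_profile m -> #|(m i).2| = p /\ i \notin (m i).2.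
Proof. by move=> /forallP /(_ i) /andP [/eqP -> ->]. Qed.

Lemma outcome_score p (m : mprofile p) x : 0 < p ->
  outcome m x = ((score m x)%:R / (DD p)%:R)%R.
Proof.
move=> hp.
have hD : ((DD p)%:R : rat) != 0%R by rewrite pnatr_eq0 /DD; lia.
rewrite /outcome /score.
case: ifP => _; first by rewrite /pure ffunE natrM mulfK.
case: ifP => _; first by rewrite /pure ffunE natrM mulfK.
rewrite /eta_lottery ffunE /eta_i -mulr_suml -natr_sum /cnt /Fc.
by rewrite -big_mkcond.
Qed.

Lemma sd_score p (m m' : mprofile p) z : 0 < p ->
  sd_strict z (outcome m') (outcome m) = (score m z < score m' z)%N.
Proof.
move=> hp; rewrite /sd_strict !outcome_score //.
by rewrite ltr_pM2r ?ltr_nat // invr_gt0 ltr0n /DD; lia.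
Qed.

Lemma ne_le p (R : profile p) (m : mprofile p) i mi : 0 < p ->
  nash_eq R m -> valid_msg i mi -> score (deviate m i mi) (R i) <= score m (R i).
Proof.
move=> hp [_ H] v; have := H i mi v; by rewrite sd_score // -leqNgt.
Qed.

Lemma blocP p (m : mprofile p) x (B : {set agent p}) :
  reflect (p.+1 <= #|B| /\ forall i, i \in B -> (m i).1 = x /\ (m i).2 \subset B)
          (is_bloc m x B).
Proof.
apply: (iffP andP) => [[h /forall_inP H]|[h H]]; split => //.
  by move=> i /H /andP [/eqP -> ->].
by apply/forall_inP => i /H [-> ->]; rewrite eqxx.
Qed.

Lemma big_meet p (A B : {set agent p}) :
  p.+1 <= #|A| -> p.+1 <= #|B| -> exists i, (i \in A) && (i \in B).
Proof.
move=> hA hB; have := cardsUI A B; have := max_card (A :|: B).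
rewrite card_agent => h1 h2.
have : 0 < #|A :&: B| by lia.
by rewrite card_gt0 => /set0Pn [i]; rewrite inE => hi; exists i.
Qed.

Lemma bloc_vote p (m : mprofile p) x y B1 B2 :
  is_bloc m x B1 -> is_bloc m y B2 -> x = y.
Proof.
move=> /blocP [h1 H1] /blocP [h2 H2].
have [i /andP [i1 i2]] := big_meet h1 h2.
by have [<- _] := H1 i i1; have [<- _] := H2 i i2.
Qed.

Lemma hbloc_vote p (m : mprofile p) x y :
  has_bloc m x -> has_bloc m y -> x = y.
Proof. by move=> /existsP [B1 h1] /existsP [B2 h2]; apply: bloc_vote h1 h2. Qed.

Lemma closed_card p (m : mprofile p) (C : {set agent p}) j :
  valid_profile m -> j \in C -> (forall i, i \in C -> (m i).2 \subset C) ->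
  p.+1 <= #|C|.
Proof.
move=> v jC H; have [c1 c2] := validP j v.
have : j |: (m j).2 \subset C by rewrite subUset sub1set jC H.
by move/subset_leq_card; rewrite cardsU1 c2 c1.
Qed.

Lemma score_bloc p (m : mprofile p) z x :
  has_bloc m z -> score m x = (x == z) * DD p.
Proof.
move=> hz; rewrite /score; case: z hz => hz; first by rewrite hz.
case: ifP => h; first by have := hbloc_vote h hz.
by rewrite hz.
Qed.

Lemma score_nob p (m : mprofile p) x :
  ~~ has_bloc m true -> ~~ has_bloc m false -> score m x = cnt m x.
Proof. by rewrite /score => /negbTE -> /negbTE ->. Qed.

Lemma outcome_bloc p (m : mprofile p) z :
  has_bloc m z -> outcome m = pure z.
Proof.
rewrite /outcome; case: z => hz; first by rewrite hz.
case: ifP => h; first by have := hbloc_vote h hz.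
by rewrite hz.
Qed.

Lemma dev_eq p (m : mprofile p) i mi j : j != i -> deviate m i mi j = m j.
Proof. by rewrite /deviate ffunE => /negbTE ->. Qed.

Lemma dev_i p (m : mprofile p) i mi : deviate m i mi i = mi.
Proof. by rewrite /deviate ffunE eqxx. Qed.

Lemma dev_valid p (m : mprofile p) i mi :
  valid_profile m -> valid_msg i mi -> valid_profile (deviate m i mi).
Proof.
move=> /forallP v vi; apply/forallP => j.
by case: (eqVneq j i) => [->|h]; [rewrite dev_i | rewrite dev_eq].
Qed.

Lemma bloc_dev_out p (m : mprofile p) i mi x (B : {set agent p}) :
  i \notin B -> is_bloc (deviate m i mi) x B = is_bloc m x B.
Proof.
move=> iB; apply/blocP/blocP => [] [h H]; split => // j jB;
  have ji : j != i by apply: contraNneq iB => <-.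
  by rewrite -(dev_eq m mi ji); apply: H.
by rewrite (dev_eq m mi ji); apply: H.
Qed.

Lemma hbloc_dev p (m : mprofile p) i mi y :
  y != mi.1 -> has_bloc (deviate m i mi) y -> has_bloc m y.
Proof.
move=> hy /existsP [B hB]; apply/existsP; exists B.
have iB : i \notin B.
  apply/negP => iB; move/blocP: hB => [_ /(_ i iB) []].
  by rewrite dev_i => e; rewrite e eqxx in hy.
by rewrite -(bloc_dev_out m mi _ iB) //.
Qed.

Lemma card_setb (T : finType) (P : pred T) : #|[set x | P x]| = \sum_x (P x : nat).
Proof. rewrite -sum1dep_card big_mkcond; apply: eq_bigr => x _; by case: (P x). Qed.

Lemma card_sum (T : finType) (A : {set T}) : #|A| = \sum_x (x \in A : nat).
Proof. rewrite -sum1_card big_mkcond; apply: eq_bigr => x _; by case: (x \in A). Qed.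

Lemma sum_const_agent p n : \sum_(j : agent p) n = (2 * p * n)%N.
Proof. by rewrite big_const card_agent iter_addn_0 mulnC. Qed.

Lemma cnt_total p (m : mprofile p) : valid_profile m ->
  cnt m true + cnt m false = DD p.
Proof.
move=> v; rewrite /cnt -big_split /=.
rewrite (eq_bigr (fun k => \sum_j ((j != k) && (k \in (m j).2) : nat))); last first.
  move=> k _; rewrite /Fc /named -card_setb; by case: (m k).1; rewrite ?addn0 ?add0n.
rewrite exchange_big /=.
rewrite (eq_bigr (fun j => p)) ?sum_const_agent // => j _.
have [c1 c2] := validP j v; rewrite -[RHS]c1 card_sum; apply: eq_bigr => k _.
by case: (eqVneq j k) => [<-|]; [rewrite (negbTE c2)| ].
Qed.

Lemma cntE p (m : mprofile p) x : valid_profile m ->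
  cnt m x = \sum_j #|[set k in (m j).2 | (m k).1 == x]|.
Proof.
move=> v; rewrite /cnt.
rewrite (eq_bigr (fun k => \sum_j ((((m k).1 == x) && (j != k) && (k \in (m j).2)) : nat))); last first.
  move=> k _; rewrite /Fc /named card_setb; case: ((m k).1 == x) => //=.
  by rewrite big1.
rewrite exchange_big /=; apply: eq_bigr => j _.
rewrite card_sum; apply: eq_bigr => k _; rewrite !inE.
have [c1 c2] := validP j v.
case: (eqVneq j k) => [<-|_]; first by rewrite (negbTE c2) andbF.
by rewrite andbT andbC.
Qed.

Lemma sum_lt (T : finType) (F G : T -> nat) k0 :
  (forall k, F k <= G k) -> F k0 < G k0 -> \sum_k F k < \sum_k G k.
Proof.
move=> H h; rewrite (bigD1 k0) //= [X in _ < X](bigD1 k0) //=.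
have : \sum_(k | k != k0) F k <= \sum_(k | k != k0) G k by apply: leq_sum.
lia.
Qed.

Lemma cnt_le p (m m' : mprofile p) x :
  (forall k, (m' k).1 == x -> ((m k).1 == x) /\ named m' k \subset named m k) ->
  cnt m' x <= cnt m x.
Proof.
move=> H; apply: leq_sum => k _; rewrite /Fc; case: ifP => h //.
by have [-> s] := H k h; apply: subset_leq_card.
Qed.

Lemma nobloc_pos p (m : mprofile p) x : 0 < p -> valid_profile m ->
  ~~ has_bloc m (~~ x) -> exists k j, [/\ (m k).1 = x, j != k & k \in (m j).2].
Proof.
move=> hp v nb.
case: (pickP (fun kj : agent p * agent p =>
   ((m kj.1).1 == x) && (kj.2 != kj.1) && (kj.1 \in (m kj.2).2))) => [[k j] /= /andP [/andP [/eqP h1 h2] h3]|H].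
  by exists k, j.
exfalso; move/negP: nb; apply.
set Y := [set j | (m j).1 == ~~ x].
have clo : forall j, j \in Y -> (m j).2 \subset Y.
  move=> j _; apply/subsetP => k kc; rewrite inE.
  have [_ c2] := validP j v.
  have jk : j != k by apply: contraNneq c2 => e; rewrite {1}e.
  have := H (k, j); rewrite /= kc jk !andbT.
  by case: ((m k).1); case: (x) => /=; rewrite ?eqxx //= => /negP.
have j0 : agent p by exists 0%N; rewrite /=; lia.
have [c1 _] := validP j0 v.
have : 0 < #|(m j0).2| by rewrite c1.
rewrite card_gt0 => /set0Pn [k kc].
have kY : k \in Y.
  have [_ c2] := validP j0 v.
  have jk : j0 != k by apply: contraNneq c2 => e; rewrite {1}e.
  by have := H (k, j0); rewrite /= kc jk !andbT inE; case: ((m k).1); case: (x) => /=; rewrite ?eqxx //= => /negP.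
apply/existsP; exists Y; apply/blocP; split; first exact: closed_card v kY clo.
by move=> i iY; split; [move: iY; rewrite inE => /eqP | exact: clo].
Qed.

Lemma cnt_sum2 p (m : mprofile p) x : valid_profile m ->
  cnt m x + cnt m (~~ x) = DD p.
Proof. by case: x => v /=; [|rewrite addnC]; apply: cnt_total. Qed.

Lemma cnt_pos p (m : mprofile p) x : 0 < p -> valid_profile m ->
  ~~ has_bloc m (~~ x) -> 0 < cnt m x.
Proof.
move=> hp v nb; have [k [j [h1 h2 h3]]] := nobloc_pos hp v nb.
rewrite /cnt (bigD1 k) //= {1}/Fc h1 eqxx.
have : 0 < #|named m k| by rewrite card_gt0; apply/set0Pn; exists j; rewrite inE h2 h3.
lia.
Qed.

Lemma cnt_ltD p (m : mprofile p) x : 0 < p -> valid_profile m ->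
  ~~ has_bloc m x -> cnt m x < DD p.
Proof.
move=> hp v nb; have := cnt_sum2 x v.
have := @cnt_pos p m (~~ x) hp v; rewrite negbK => /(_ nb); lia.
Qed.

Lemma score_nob2 p (m : mprofile p) z x :
  ~~ has_bloc m z -> ~~ has_bloc m (~~ z) -> score m x = cnt m x.
Proof. by case: z => h1 h2; rewrite score_nob. Qed.

Lemma score_leD p (m : mprofile p) x : valid_profile m -> score m x <= DD p.
Proof.
move=> v; rewrite /score.
case: ifP => _; first by case: (x == true); rewrite ?mul1n ?mul0n.
case: ifP => _; first by case: (x == false); rewrite ?mul1n ?mul0n.
by have := cnt_sum2 x v; lia.
Qed.

Lemma Fc_mono p (m m' : mprofile p) z k :
  ((m k).1 == z -> (m' k).1 == z /\ named m k \subset named m' k) ->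
  Fc m z k <= Fc m' z k.
Proof.
rewrite /Fc; case: ifP => h // /(_ isT) [-> s]; exact: subset_leq_card.
Qed.

Lemma dev_gain p (R : profile p) (m : mprofile p) i mi :
  0 < p -> nash_eq R m -> valid_msg i mi -> mi.1 = R i ->
  ~~ has_bloc m true -> ~~ has_bloc m false ->
  cnt m (R i) < cnt (deviate m i mi) (R i) -> False.
Proof.
move=> hp ne vi e nb1 nb2 lt.
have v : valid_profile m by case: ne.
have nbz : forall z, ~~ has_bloc m z by case.
have := ne_le hp ne vi.
have nb' : ~~ has_bloc (deviate m i mi) (~~ R i).
  apply/negP => /hbloc_dev; rewrite e; case: (R i) => /(_ isT); apply/negP; exact: nbz.
rewrite (score_nob2 _ (nbz (R i)) (nbz (~~ R i))).
case: (boolP (has_bloc (deviate m i mi) (R i))) => hb.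
  rewrite (score_bloc _ hb) eqxx mul1n.
  by have := cnt_ltD hp v (nbz (R i)); lia.
by rewrite (score_nob2 _ hb nb'); lia.
Qed.

Lemma ne_named p (R : profile p) (m : mprofile p) j k :
  0 < p -> nash_eq R m -> ~~ has_bloc m true -> ~~ has_bloc m false ->
  j != k -> k \in (m j).2 -> (m k).1 = R k.
Proof.
move=> hp ne nb1 nb2 jk kc.
have v : valid_profile m by case: ne.
case: (eqVneq (m k).1 (R k)) => // hne; exfalso.
pose mi : message p := (R k, (m k).2).
have [c1 c2] := validP k v.
have vi : valid_msg k mi by rewrite /valid_msg /= c1 eqxx c2.
apply: (dev_gain hp ne vi erefl nb1 nb2).
have nm : forall k', named (deviate m k mi) k' = named m k'.
  move=> k'; apply/setP => j'; rewrite !inE.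
  by case: (eqVneq j' k) => [->|h]; [rewrite dev_i | rewrite dev_eq].
apply: (@sum_lt _ (Fc m (R k)) (Fc (deviate m k mi) (R k)) k).
  move=> k'; apply: Fc_mono; rewrite nm subxx; split => //.
  by case: (eqVneq k' k) => [->|h]; [rewrite dev_i | rewrite dev_eq].
rewrite /Fc (negbTE hne) dev_i eqxx nm card_gt0; apply/set0Pn; exists j.
by rewrite inE jk kc.
Qed.

Lemma ne_swap p (R : profile p) (m : mprofile p) i k l :
  0 < p -> nash_eq R m -> ~~ has_bloc m true -> ~~ has_bloc m false ->
  k != i -> (m k).1 = R i -> k \notin (m i).2 -> l \in (m i).2 ->
  (m l).1 != R i -> False.
Proof.
move=> hp ne nb1 nb2 ki hk kc lc hl.
have v : valid_profile m by case: ne.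
set z := R i in hk hl *.
pose mi : message p := (z, k |: ((m i).2 :\ l)).
have [c1 c2] := validP i v.
have vi : valid_msg i mi.
  rewrite /valid_msg /= cardsU1 !inE negb_and kc orbT /=.
  have e : #|(m i).2 :\ l| = p.-1 by have := cardsD1 l (m i).2; rewrite lc c1 add1n => /(congr1 predn) /= ->.
  rewrite e add1n prednK // eqxx /=.
  by rewrite negb_or negb_and c2 orbT andbT eq_sym.
apply: (dev_gain hp ne vi erefl nb1 nb2).
apply: (@sum_lt _ (Fc m z) (Fc (deviate m i mi) z) k).
  move=> k'; apply: Fc_mono => hk'; split.
    by case: (eqVneq k' i) => [->|h]; [rewrite dev_i | rewrite dev_eq].
  apply/subsetP => j; rewrite !inE => /andP [jk' k'c]; rewrite jk' /=.
  case: (eqVneq j i) => [ji|h]; last by rewrite dev_eq.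
  rewrite ji dev_i /= !inE -ji k'c andbT; apply/orP; right.
  by apply: contraNneq hl => <-.
rewrite /Fc (dev_eq m mi ki) hk eqxx.
have sub : named m k \subset named (deviate m i mi) k :\ i.
  apply/subsetP => j; rewrite !inE => /andP [jk kc'].
  have ji : j != i by apply: contraNneq kc => <-.
  by rewrite ji jk dev_eq.
have iin : i \in named (deviate m i mi) k by rewrite !inE eq_sym ki dev_i /= !inE eqxx.
have h1 := subset_leq_card sub; have h2 := cardsD1 i (named (deviate m i mi) k).
by rewrite iin in h2; rewrite h2 add1n ltnS.
Qed.

Lemma ne_struct p (R : profile p) (m : mprofile p) i :
  0 < p -> nash_eq R m -> ~~ has_bloc m true -> ~~ has_bloc m false ->
  (m i).1 = R i ->
  ((m i).2 \subset [set k | (m k).1 == R i] :&: supporters R (R i)) \/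
  ([set k | (m k).1 == R i] :\ i \subset (m i).2 /\
   [set k | (m k).1 == R i] \subset supporters R (R i)).
Proof.
move=> hp ne nb1 nb2 hi.
have v : valid_profile m by case: ne.
have [c1 c2] := validP i v.
have nm : forall k, k \in (m i).2 -> (m k).1 = R k.
  move=> k kc; apply: (ne_named hp ne nb1 nb2 _ kc).
  by apply: contraNneq c2 => e; move: kc; rewrite -e.
case: (boolP ((m i).2 \subset [set k | (m k).1 == R i])) => h.
  left; apply/subsetP => k kc; rewrite inE (subsetP h k kc) /= inE.
  by move: (subsetP h k kc); rewrite inE -(nm k kc).
right; move/subsetPn: h => [l lc lZ].
have sub : [set k | (m k).1 == R i] :\ i \subset (m i).2.
  apply/subsetP => k; rewrite !inE => /andP [ki /eqP hk].
  apply/negPn/negP => kc.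
  apply: (ne_swap hp ne nb1 nb2 ki hk kc lc).
  by move: lZ; rewrite inE.
split => //; apply/subsetP => k kZ; rewrite inE.
case: (eqVneq k i) => [e|kni]; first by rewrite e.
have kc : k \in (m i).2 by apply: (subsetP sub); rewrite in_setD1 kni kZ.
by move: kZ; rewrite inE -(nm k kc).
Qed.

Lemma supp_sum p (R : profile p) x :
  #|supporters R x| + #|supporters R (~~ x)| = (2 * p)%N.
Proof.
have -> : supporters R (~~ x) = ~: supporters R x.
  by apply/setP => k; rewrite !inE; case: (R k); case: (x).
by rewrite cardsC card_agent.
Qed.

Lemma ne_bloc p (R : profile p) (m : mprofile p) x :
  0 < p -> nash_eq R m -> has_bloc m x -> p.+1 <= #|supporters R x|.
Proof.
move=> hp ne /existsP [B0 hB0].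
have v : valid_profile m by case: ne.
case: (arg_minnP (fun B : {set agent p} => #|B|) hB0) => M hM minM.
have Msub : forall B, is_bloc m x B -> M \subset B.
  move=> B hB; set C := B :&: M.
  have [hB1 HB] := blocP _ _ _ hB; have [hM1 HM] := blocP _ _ _ hM.
  have [j /andP [jB jM]] := big_meet hB1 hM1.
  have clo : forall i, i \in C -> (m i).2 \subset C.
    move=> i; rewrite inE => /andP [iB iM].
    by rewrite subsetI (HB i iB).2 (HM i iM).2.
  have jC : j \in C by rewrite inE jB jM.
  have hC : is_bloc m x C.
    apply/blocP; split; first exact: closed_card v jC clo.
    move=> i iC; split; last exact: clo.
    by move: iC; rewrite inE => /andP [/HB []].
  have := minM C hC; have sCM : C \subset M by apply: subsetIr.
  move=> le; have : C == M by rewrite eqEcard sCM le.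
  by move/eqP => e; apply/setIidPr; rewrite -/C e.
rewrite leqNgt; apply/negP => small.
have [hM1 HM] := blocP _ _ _ hM.
case: (boolP (M \subset supporters R x)) => hs.
  by have := subset_leq_card hs; lia.
move/subsetPn: hs => [i iM nS].
have hx : x = ~~ R i by move: nS; rewrite inE; case: (R i); case: (x).
pose mi : message p := (R i, (m i).2).
have [c1 c2] := validP i v.
have vi : valid_msg i mi by rewrite /valid_msg /= c1 eqxx c2.
have := ne_le hp ne vi.
have hbm : has_bloc m x by apply/existsP; exists M.
rewrite (score_bloc _ hbm) hx.
have -> : (R i == ~~ R i) = false by case: (R i).
rewrite mul0n leqn0 => /eqP s0.
have v' := dev_valid v vi.
have nb : ~~ has_bloc (deviate m i mi) (~~ R i).
  apply/negP => /existsP [B hB].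
  have iB : i \notin B.
    apply/negP => iB; move/blocP: hB => [_ /(_ i iB) []].
    by rewrite dev_i /=; case: (R i).
  have := Msub B; rewrite -(bloc_dev_out m mi _ iB) hx => /(_ hB) /subsetP /(_ i iM).
  by rewrite (negbTE iB).
case: (boolP (has_bloc (deviate m i mi) (R i))) => hb.
  move: s0; rewrite (score_bloc _ hb) eqxx mul1n /DD => /eqP.
  by rewrite !muln_eq0 /= eqn0Ngt hp.
move: s0; rewrite (score_nob2 _ hb nb) => s0.
by have := cnt_pos hp v' nb; rewrite s0.
Qed.

Lemma vote_sum p (m : mprofile p) x :
  #|[set k | (m k).1 == x]| + #|[set k | (m k).1 == ~~ x]| = (2 * p)%N.
Proof.
have -> : [set k | (m k).1 == ~~ x] = ~: [set k | (m k).1 == x].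
  by apply/setP => k; rewrite !inE; case: ((m k).1); case: (x).
by rewrite cardsC card_agent.
Qed.

Lemma maj_nobloc p (R : profile p) (m : mprofile p) x :
  0 < p -> nash_eq R m -> ~~ has_bloc m true -> ~~ has_bloc m false ->
  p.+1 <= #|supporters R x| -> False.
Proof.
move=> hp ne nb1 nb2 hS.
have v : valid_profile m by case: ne.
have nbz : forall z, ~~ has_bloc m z by case.
set X := [set k | (m k).1 == x].
case: (leqP p.+1 #|X|) => hX.
  set C := X :&: supporters R x.
  have [j /andP [jX jS]] := big_meet hX hS.
  have jC : j \in C by rewrite inE jX jS.
  have clo : forall i, i \in C -> (m i).2 \subset C.
    move=> i; rewrite !inE => /andP [/eqP iX /eqP iS].
    have e : (m i).1 = R i by rewrite iX iS.
    have [c1 c2] := validP i v.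
    case: (ne_struct hp ne nb1 nb2 e); rewrite iS //.
    move=> [s1 s2].
    have iXX : i \in X by rewrite inE iX.
    have hc : #|X| = (1 + #|X :\ i|)%N by rewrite (cardsD1 i X) iXX.
    have : X :\ i == (m i).2.
      rewrite eqEcard s1 c1 /= -ltnS; apply: (leq_trans hX).
      by rewrite (cardsD1 i X) iXX add1n.
    move/eqP => <-; rewrite subsetI; apply/andP; split.
      exact: subD1set.
    exact: subset_trans (subD1set X i) s2.
  have := nbz x; move/negP; apply; apply/existsP; exists C; apply/blocP; split.
    exact: closed_card v jC clo.
  move=> i iC; split; last exact: clo.
  by move: iC; rewrite !inE => /andP [/eqP].
have := nobloc_pos hp v (nbz (~~ ~~ x)).
move=> [k [j [hk jk kc]]].
have ek := ne_named hp ne nb1 nb2 jk kc.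
have Rk : R k = ~~ x by rewrite -ek.
have hsum := supp_sum R x.
have hv := vote_sum m x.
have [c1 c2] := validP k v.
case: (ne_struct hp ne nb1 nb2 ek); rewrite Rk.
  rewrite subsetI => /andP [_ s].
  have : k |: (m k).2 \subset supporters R (~~ x).
    by rewrite subUset s sub1set inE Rk eqxx.
  move/subset_leq_card; rewrite cardsU1 c2 c1 => hle0.
  have hle : p.+1 <= #|supporters R (~~ x)| := hle0.
  clear -hle hsum hS; lia.
move=> [_ s]; have hle := subset_leq_card s.
have hY : #|[set k0 | (m k0).1 == ~~ x]| <= #|supporters R (~~ x)| := hle.
have hv' : #|X| + #|[set k0 | (m k0).1 == ~~ x]| = (2 * p)%N := hv.
have hX' : #|X| <= p := hX.
clear -hY hv' hsum hS hX'; lia.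
Qed.

Lemma case1_big p (R : profile p) (m : mprofile p) i (Z : {set agent p}) :
  valid_profile m -> (m i).2 \subset Z :&: supporters R (R i) ->
  p.+1 <= #|supporters R (R i)|.
Proof.
move=> v; rewrite subsetI => /andP [_ s].
have [c1 c2] := validP i v.
have : i |: (m i).2 \subset supporters R (R i) by rewrite subUset s sub1set inE eqxx.
by move/subset_leq_card; rewrite cardsU1 c2 c1.
Qed.

Lemma tie_nobloc p (R : profile p) (m : mprofile p) :
  0 < p -> nash_eq R m -> ~~ has_bloc m true -> ~~ has_bloc m false ->
  (forall z, #|supporters R z| <= p) ->
  (forall k, (m k).1 = R k) /\
  (forall j, [set k | (m k).1 == R j] :\ j \subset (m j).2).
Proof.
move=> hp ne nb1 nb2 hS.
have v : valid_profile m by case: ne.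
have nbz : forall z, ~~ has_bloc m z by case.
have step1 : forall z k, (m k).1 = z -> R k = z.
  move=> z k hk.
  have [k0 [j [h0 jk kc]]] := nobloc_pos hp v (nbz (~~ z)).
  have e0 := ne_named hp ne nb1 nb2 jk kc.
  case: (ne_struct hp ne nb1 nb2 e0) => [/(case1_big v)|[_ s]].
    by have := hS (R k0); lia.
  have : k \in [set k | (m k).1 == R k0] by rewrite inE hk -e0 h0.
  by move/(subsetP s); rewrite inE => /eqP ->; rewrite -e0 h0.
have e : forall k, (m k).1 = R k by move=> k; apply/esym/step1.
split => // j.
case: (ne_struct hp ne nb1 nb2 (e j)) => [/(case1_big v)|[s _]] //.
by have := hS (R j); lia.
Qed.

Lemma count_tie p (R : profile p) (m : mprofile p) x :
  0 < p -> valid_profile m -> (forall k, (m k).1 = R k) ->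
  (forall z, #|supporters R z| = p) ->
  (forall j, [set k | (m k).1 == R j] :\ j \subset (m j).2) ->
  cnt m x = (p * p)%N.
Proof.
move=> hp v e hS hsub.
have XS : forall z, [set k | (m k).1 == z] = supporters R z.
  by move=> z; apply/setP => k; rewrite !inE e.
rewrite cntE //.
rewrite (eq_bigr (fun j => if R j == x then p.-1 else 1%N)); last first.
  move=> j _; have [c1 c2] := validP j v.
  have hj := hsub j; rewrite XS in hj.
  case: ifP => hx.
    have -> : [set k in (m j).2 | (m k).1 == x] = supporters R x :\ j.
      apply/setP => k; rewrite !inE e; apply/andP/andP => [[kc ->]|[kj kx]].
        by split => //; apply: contraNneq c2 => ee; move: kc; rewrite ee.
      split => //; apply: (subsetP hj); rewrite !inE kj /= (eqP hx) //.
    have h2 := cardsD1 j (supporters R x); rewrite inE hx in h2.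
    have h2' : #|supporters R x| = (#|supporters R x :\ j|).+1 := h2.
    by rewrite hS in h2'; rewrite [in RHS]h2'.
  have hx' : R j = ~~ x by move: hx; case: (R j); case: (x).
  rewrite hx' in hj.
  have -> : [set k in (m j).2 | (m k).1 == x] = (m j).2 :\: supporters R (~~ x).
    by apply/setP => k; rewrite !inE e; case: (R k); case: (x); rewrite ?andbT ?andbF.
  have hI : (m j).2 :&: supporters R (~~ x) = supporters R (~~ x) :\ j.
    apply/setP => k; rewrite !inE; apply/andP/andP => [[kc ->]|[kj kx]].
      by split => //; apply: contraNneq c2 => ee; move: kc; rewrite ee.
    split => //; apply: (subsetP hj); rewrite !inE kj //.
  have h1 := cardsID (supporters R (~~ x)) (m j).2; rewrite hI c1 in h1.
  have h2 := cardsD1 j (supporters R (~~ x)); rewrite inE hx' eqxx in h2.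
  have h2' : #|supporters R (~~ x)| = (#|supporters R (~~ x) :\ j|).+1 := h2.
  rewrite hS in h2'.
  clear -h1 h2'; lia.
rewrite (bigID (fun j => R j == x)) /=.
rewrite (eq_bigr (fun _ => p.-1)); last by move=> j ->.
rewrite [X in _ + X](eq_bigr (fun _ => 1%N)); last by move=> j /negbTE ->.
rewrite !sum_nat_cond_const.
have -> : [set j | R j == x] = supporters R x by [].
have -> : [set j | R j != x] = supporters R (~~ x).
  by apply/setP => k; rewrite !inE; case: (R k); case: (x).
rewrite !hS muln1 -mulnSr prednK //.
Qed.

Lemma exists_sub (T : finType) (A : {set T}) n :
  n <= #|A| -> exists B : {set T}, (B \subset A) && (#|B| == n).
Proof.
elim: n => [|n IH] h; first by exists set0; rewrite sub0set cards0.
have [B /andP [sB /eqP cB]] := IH (ltnW h).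
have : ~~ (A \subset B).
  apply/negP => /subset_leq_card; rewrite cB; lia.
move/subsetPn => [a aA aB]; exists (a |: B).
by rewrite subUset sub1set aA sB cardsU1 aB cB; apply: eqxx.
Qed.

Lemma maj_single p (R : profile p) x :
  Maj R = [set x] -> p.+1 <= #|supporters R x|.
Proof.
rewrite /Maj; case: ifP => h1; first by move/set1_inj => <-.
case: ifP => h2; first by move/set1_inj => <-.
move=> e; have : (~~ x) \in [set: alt] by rewrite inE.
by rewrite e inE; case: (x).
Qed.

Lemma maj_all p (R : profile p) :
  Maj R = [set: alt] -> forall z, #|supporters R z| = p.
Proof.
rewrite /Maj; case: ifP => h1.
  move=> e; have : false \in [set: alt] by rewrite inE.
  by rewrite -e inE.
case: ifP => h2.
  move=> e; have : true \in [set: alt] by rewrite inE.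
  by rewrite -e inE.
move=> _; have hs : #|supporters R true| + #|supporters R false| = (2 * p)%N := supp_sum R true.
move/negbT: h1; move/negbT: h2; rewrite -!ltnNge => h2 h1.
rewrite /opt_a /opt_b in h1 h2.
by case; lia.
Qed.

Definition cfun p (R : profile p) (x : alt) (j : agent p) : {set agent p} :=
  odflt set0 [pick B : {set agent p} | (B \subset supporters R x :\ j) && (#|B| == p)].

Lemma cfun_spec p (R : profile p) x j : p.+1 <= #|supporters R x| ->
  cfun R x j \subset supporters R x :\ j /\ #|cfun R x j| = p.
Proof.
move=> hS; rewrite /cfun; case: pickP => [B /andP [s /eqP c]|H] //=.
have h : p <= #|supporters R x :\ j|.
  have := cardsD1 j (supporters R x); case: (j \in supporters R x) => /= e.
    have e' : #|supporters R x| = (#|supporters R x :\ j|).+1 := e.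
    by move: hS; rewrite e' ltnS.
  have e' : #|supporters R x| = #|supporters R x :\ j| := e.
  by move: hS; rewrite e'; apply: ltnW.
have [B /andP [s c]] := exists_sub h.
by have := H B; rewrite s c.
Qed.

Definition mmaj p (R : profile p) (x : alt) : mprofile p :=
  [ffun j => (x, cfun R x j)].

Lemma mmaj_ne p (R : profile p) x : 0 < p -> p.+1 <= #|supporters R x| ->
  nash_eq R (mmaj R x).
Proof.
move=> hp hS.
have v : valid_profile (mmaj R x).
  apply/forallP => j; rewrite /valid_msg /mmaj ffunE /=.
  have [s c] := cfun_spec j hS.
  rewrite c eqxx /=; apply/negP => /(subsetP s); by rewrite !inE eqxx.
have hb : is_bloc (mmaj R x) x (supporters R x).
  apply/blocP; split => // k _; rewrite /mmaj ffunE /=; split => //.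
  have [s _] := cfun_spec k hS.
  exact: subset_trans s (subD1set _ _).
have hbm : has_bloc (mmaj R x) x by apply/existsP; exists (supporters R x).
split => // i mi vi.
rewrite sd_score // -leqNgt (score_bloc _ hbm).
case: (eqVneq (R i) x) => [e|ne].
  by rewrite mul1n; apply: score_leD; apply: dev_valid.
have iS : i \notin supporters R x by rewrite inE ne.
have hb' : has_bloc (deviate (mmaj R x) i mi) x.
  by apply/existsP; exists (supporters R x); rewrite bloc_dev_out.
by rewrite (score_bloc _ hb') (negbTE ne).
Qed.

Definition ecand p (R : profile p) (j : agent p) : agent p :=
  odflt j [pick k in supporters R (~~ R j)].

Lemma ecand_spec p (R : profile p) j : 0 < p -> (forall z, #|supporters R z| = p) ->
  R (ecand R j) = ~~ R j.
Proof.
move=> hp hS; rewrite /ecand; case: pickP => [k|H] /=; first by rewrite inE => /eqP.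
have : #|supporters R (~~ R j)| = 0%N by apply: eq_card0 => k; rewrite H.
by rewrite hS => e; rewrite e in hp.
Qed.

Definition mtie p (R : profile p) : mprofile p :=
  [ffun j => (R j, ecand R j |: (supporters R (R j) :\ j))].

Lemma mtie_vote p (R : profile p) k : (mtie R k).1 = R k.
Proof. by rewrite /mtie ffunE. Qed.

Lemma mtie_valid p (R : profile p) : 0 < p -> (forall z, #|supporters R z| = p) ->
  valid_profile (mtie R).
Proof.
move=> hp hS; apply/forallP => j; rewrite /valid_msg /mtie ffunE /=.
have he := ecand_spec j hp hS.
rewrite cardsU1 !inE he negb_and.
have -> : (~~ R j != R j) = true by case: (R j).
rewrite orbT.
have h2 := cardsD1 j (supporters R (R j)); rewrite inE eqxx in h2.
have h2' : #|supporters R (R j)| = (#|supporters R (R j) :\ j|).+1 := h2.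
rewrite hS in h2'.
have -> : (true + #|supporters R (R j) :\ j|)%N = p by rewrite [RHS]h2'.
rewrite eqxx /= eqxx /= ?andbF ?orbF.
by apply/eqP => e; move: he; rewrite -e; case: (R j).
Qed.

Lemma mtie_nobloc p (R : profile p) z : (forall z, #|supporters R z| = p) ->
  ~~ has_bloc (mtie R) z.
Proof.
move=> hS; apply/negP => /existsP [B /blocP [hB H]].
have : B \subset supporters R z.
  by apply/subsetP => k kB; rewrite inE -mtie_vote (H k kB).1.
by move/subset_leq_card; rewrite hS; lia.
Qed.

Lemma mtie_sub p (R : profile p) j :
  [set k | (mtie R k).1 == R j] :\ j \subset (mtie R j).2.
Proof.
rewrite /mtie ffunE /=; apply/subsetP => k; rewrite !inE ffunE /= => /andP [kj kR].
by rewrite kj kR orbT.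
Qed.

Lemma outcome_half p (m : mprofile p) : 0 < p ->
  ~~ has_bloc m true -> ~~ has_bloc m false -> (forall y, cnt m y = (p * p)%N) ->
  outcome m = half_lottery.
Proof.
move=> hp nb1 nb2 H; apply/ffunP => y.
rewrite outcome_score // score_nob // H /half_lottery ffunE /DD.
rewrite -mulnA natrM; field.
by rewrite pnatr_eq0 eqn0Ngt hp.
Qed.

Lemma mtie_ne p (R : profile p) : 0 < p -> (forall z, #|supporters R z| = p) ->
  nash_eq R (mtie R).
Proof.
move=> hp hS.
have v := mtie_valid hp hS.
have nb : forall z, ~~ has_bloc (mtie R) z by move=> z; apply: mtie_nobloc.
have hc : forall y, cnt (mtie R) y = (p * p)%N.
  by move=> y; apply: count_tie hp v (@mtie_vote p R) hS (@mtie_sub p R).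
split => // i mi vi.
rewrite sd_score // -leqNgt (score_nob _ (nb true) (nb false)).
set z := R i.
have vote' : forall k, (deviate (mtie R) i mi k).1 == z -> R k = z.
  move=> k; case: (eqVneq k i) => [->|ki] //.
  by rewrite dev_eq // mtie_vote => /eqP.
case: (boolP (has_bloc (deviate (mtie R) i mi) z)) => hb.
  exfalso; move/existsP: hb => [B /blocP [hB H]].
  have : B \subset supporters R z.
    by apply/subsetP => k kB; rewrite inE (vote' k) // (H k kB).1.
  by move/subset_leq_card; rewrite hS; lia.
case: (boolP (has_bloc (deviate (mtie R) i mi) (~~ z))) => hb2.
  by rewrite (score_bloc _ hb2); case: (z).
rewrite (score_nob2 _ hb hb2).
apply: cnt_le => k hk; have Rk := vote' k hk; split.
  by rewrite mtie_vote Rk.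
apply/subsetP => j; rewrite !inE => /andP [jk kc]; rewrite jk /=.
case: (eqVneq j i) => [ji|ji]; last by move: kc; rewrite dev_eq.
rewrite ji /mtie ffunE /= !inE; apply/orP; right.
by rewrite Rk /z eqxx andbT eq_sym -ji.
Qed.

Theorem lemma3 (p : nat) (hp : 0 < p) (R : profile p) :
  (forall x : alt, Maj R = [set x] ->
     (exists m, nash_eq R m) /\
     (forall m, nash_eq R m -> outcome m = pure x)) /\
  (Maj R = [set: alt] ->
     (exists m, nash_eq R m) /\
     (forall m, nash_eq R m -> outcome m = half_lottery)).
Proof.
split.
  move=> x hM; have hS := maj_single hM.
  split; first by exists (mmaj R x); apply: mmaj_ne.
  move=> m ne.
  case: (boolP (has_bloc m x)) => hb; first exact: outcome_bloc.
  case: (boolP (has_bloc m (~~ x))) => hb2.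
    have h1 := ne_bloc hp ne hb2; have h2 := supp_sum R x.
    exfalso; clear -h1 h2 hS; lia.
  have nb1 : ~~ has_bloc m true by case: (x) hb hb2.
  have nb2 : ~~ has_bloc m false by case: (x) hb hb2.
  by exfalso; apply: (maj_nobloc hp ne nb1 nb2 hS).
move=> hM; have hS := maj_all hM.
split; first by exists (mtie R); apply: mtie_ne.
move=> m ne.
have v : valid_profile m by case: ne.
have nb : forall z, ~~ has_bloc m z.
  move=> z; apply/negP => hb; have := ne_bloc hp ne hb; rewrite hS; lia.
have hS' : forall z, #|supporters R z| <= p by move=> z; rewrite hS.
have [e hsub] := tie_nobloc hp ne (nb true) (nb false) hS'.
have hc : forall y, cnt m y = (p * p)%N.
  by move=> y; apply: (count_tie _ hp v e hS hsub).
exact: (outcome_half hp (nb true) (nb false) hc).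
Qed.
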